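(* Let $\mathcal E_i\equiv1\to H_i\xrightarrow{\alpha_i}G_i\xrightarrow{\beta_i}K_i\to1$ ($i=1,2$) be central extensions of multiplicative Lie algebras with $\alpha_1(H_1)=\mathcal Z(G_1)$ and $\alpha_2(H_2)=\mathcal Z(G_2)$, and let $(\lambda,\mu,\nu)$ be a morphism from $\mathcal E_1$ to $\mathcal E_2$ such that $\ker\mu\cap{}^M[G_1,G_1]=1$ and $\mu(G_1)\,\alpha_2(H_2)=G_2$. Then $(\lambda,\mu,\nu)$ is an isoclinic morphism.
   Context: A multiplicative Lie algebra is a group $(G,\cdot)$ with a binary operation $\star$ such that for all $x,y,z\in G$: $x\star x=1$; $x\star(yz)=(x\star y)\,{}^y(x\star z)$; $(xy)\star z={}^x(y\star z)(x\star z)$; $((x\star y)\star{}^yz)((y\star z)\star{}^zx)((z\star x)\star{}^xy)=1$; ${}^z(x\star y)={}^zx\star{}^zy$, where ${}^xy=xyx^{-1}$. Homomorphisms preserve both operations. $Z(G)$ is the group center, $LZ(G)=\{x: x\star y=1\ \forall y\}$, $\mathcal Z(G)=LZ(G)\cap Z(G)$; $[x,y]$ is the group commutator; ${}^M[G,G]=(G\star G)[G,G]$ with $G\star G$ the ideal generated by all $a\star b$. A central extension is a short exact sequence $1\to H\xrightarrow{\alpha}G\xrightarrow{\beta}K\to1$ of multiplicative Lie algebras with $\alpha(H)\subseteq\mathcal Z(G)$. A morphism $(\lambda,\mu,\nu)$ from $\mathcal E_1$ to $\mathcal E_2$ consists of homomorphisms $\lambda:H_1\to H_2$, $\mu:G_1\to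 G_2$, $\nu:K_1\to K_2$ with $\mu\alpha_1=\alpha_2\lambda$, $\beta_2\mu=\nu\beta_1$. It is an isoclinic morphism if $\nu$ and $\mu|_{{}^M[G_1,G_1]}:{}^M[G_1,G_1]\to{}^M[G_2,G_2]$ are isomorphisms such that $\mu([g,g'])=[h,h']$ and $\mu(g\star g')=h\star h'$ whenever $g,g'\in G_1$, $h,h'\in G_2$ with $\beta_2(h)=\nu\beta_1(g)$, $\beta_2(h')=\nu\beta_1(g')$. *)

(* Defs.v *)
Set Implicit Arguments.

Record MLA := {
  car :> Type;
  mul : car -> car -> car;
  one : car;
  inv : car -> car;
  star : car -> car -> car;
  mulA : forall x y z, mul x (mul y z) = mul (mul x y) z;
  mul1g : forall x, mul one x = x;
  mulg1 : forall x, mul x one = x;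
  mulVg : forall x, mul (inv x) x = one;
  mulgV : forall x, mul x (inv x) = one;
  star_xx : forall x, star x x = one;
  star_mulr : forall x y z,
      star x (mul y z) = mul (star x y) (mul y (mul (star x z) (inv y)));
  star_mull : forall x y z,
      star (mul x y) z = mul (mul x (mul (star y z) (inv x))) (star x z);
  star_jacobi : forall x y z,
      mul (mul (star (star x y) (mul y (mul z (inv y))))
               (star (star y z) (mul z (mul x (inv z)))))
          (star (star z x) (mul x (mul y (inv x)))) = one;
  star_conj : forall x y z,
      mul z (mul (star x y) (inv z)) =
      star (mul z (mul x (inv z))) (mul z (mul y (inv z)))
}.

Arguments mul {m}. Arguments one {m}. Arguments inv {m}. Arguments star {m}.

Definition conj {G : MLA} (x y : G) : G := mul x (mul y (inv x)).
Definition comm {G : MLA} (x y : G) : G := mul x (mul y (mul (inv x) (inv y))).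

Definition is_hom {G1 G2 : MLA} (f : G1 -> G2) : Prop :=
  (forall x y, f (mul x y) = mul (f x) (f y)) /\
  (forall x y, f (star x y) = star (f x) (f y)).

Definition is_subgroup {G : MLA} (S : G -> Prop) : Prop :=
  S one /\ (forall x y, S x -> S y -> S (mul x y)) /\ (forall x, S x -> S (inv x)).

Definition is_ideal {G : MLA} (S : G -> Prop) : Prop :=
  is_subgroup S /\ (forall g x, S x -> S (conj g x)) /\
  (forall g x, S x -> S (star g x)).

Definition starG {G : MLA} (x : G) : Prop :=
  forall I : G -> Prop, is_ideal I -> (forall a b : G, I (star a b)) -> I x.

Definition commG {G : MLA} (x : G) : Prop :=
  forall S : G -> Prop, is_subgroup S -> (forall a b : G, S (comm a b)) -> S x.

Definition McommG {G : MLA} (x : G) : Prop :=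
  exists a b, starG a /\ commG b /\ x = mul a b.

(* centre, Lie centre, and Z(G) = LZ(G) ∩ Z(G) *)
Definition centerG {G : MLA} (x : G) : Prop := forall y : G, mul x y = mul y x.
Definition LcenterG {G : MLA} (x : G) : Prop := forall y : G, star x y = one.
Definition MZ {G : MLA} (x : G) : Prop := LcenterG x /\ centerG x.

Definition central_extension {H G K : MLA} (alpha : H -> G) (beta : G -> K) : Prop :=
  is_hom alpha /\ is_hom beta /\
  (forall h1 h2, alpha h1 = alpha h2 -> h1 = h2) /\
  (forall k, exists g, beta g = k) /\
  (forall g, beta g = one <-> exists h, alpha h = g) /\
  (forall h, MZ (alpha h)).

Definition ext_morphism {H1 G1 K1 H2 G2 K2 : MLA}
  (alpha1 : H1 -> G1) (beta1 : G1 -> K1) (alpha2 : H2 -> G2) (beta2 : G2 -> K2)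
  (lam : H1 -> H2) (mu : G1 -> G2) (nu : K1 -> K2) : Prop :=
  is_hom lam /\ is_hom mu /\ is_hom nu /\
  (forall h, mu (alpha1 h) = alpha2 (lam h)) /\
  (forall g, beta2 (mu g) = nu (beta1 g)).

Definition isoclinic_morphism {H1 G1 K1 H2 G2 K2 : MLA}
  (alpha1 : H1 -> G1) (beta1 : G1 -> K1) (alpha2 : H2 -> G2) (beta2 : G2 -> K2)
  (lam : H1 -> H2) (mu : G1 -> G2) (nu : K1 -> K2) : Prop :=
  ext_morphism alpha1 beta1 alpha2 beta2 lam mu nu /\
  (forall k1 k1', nu k1 = nu k1' -> k1 = k1') /\
  (forall k2, exists k1, nu k1 = k2) /\
  (forall g, McommG g -> McommG (mu g)) /\
  (forall g g', McommG g -> McommG g' -> mu g = mu g' -> g = g') /\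
  (forall x, McommG x -> exists g, McommG g /\ mu g = x) /\
  (forall (g g' : G1) (h h' : G2),
      beta2 h = nu (beta1 g) -> beta2 h' = nu (beta1 g') ->
      mu (comm g g') = comm h h' /\ mu (star g g') = star h h').

(* Main.v *)
Require Import Defs.
Set Implicit Arguments.
Arguments mulA {m}. Arguments mul1g {m}. Arguments mulg1 {m}. Arguments mulVg {m}. Arguments mulgV {m}. Arguments star_xx {m}. Arguments star_mulr {m}. Arguments star_mull {m}. Arguments star_jacobi {m}. Arguments star_conj {m}.

Lemma mulKg {G : MLA} (x y : G) : mul x (mul (inv x) y) = y.
Proof. rewrite mulA, mulgV, mul1g. reflexivity. Qed.
Lemma mulVKg {G : MLA} (x y : G) : mul (inv x) (mul x y) = y.
Proof. rewrite mulA, mulVg, mul1g. reflexivity. Qed.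
Lemma mulgK {G : MLA} (x y : G) : mul (mul y x) (inv x) = y.
Proof. rewrite <- mulA, mulgV, mulg1. reflexivity. Qed.
Lemma lcancel {G : MLA} (x y z : G) : mul x y = mul x z -> y = z.
Proof. intro E. rewrite <- (mulVKg x y), <- (mulVKg x z), E. reflexivity. Qed.
Lemma rcancel {G : MLA} (x y z : G) : mul y x = mul z x -> y = z.
Proof. intro E. rewrite <- (mulgK x y), <- (mulgK x z), E. reflexivity. Qed.
Lemma inv_unique {G : MLA} (x y : G) : mul x y = one -> y = inv x.
Proof. intro E. apply (lcancel x). rewrite E, mulgV. reflexivity. Qed.
Lemma invK {G : MLA} (x : G) : inv (inv x) = x.
Proof. symmetry. apply inv_unique. apply mulVg. Qed.
Lemma inv_mul {G : MLA} (x y : G) : inv (mul x y) = mul (inv y) (inv x).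
Proof. symmetry. apply inv_unique. rewrite <- mulA, (mulA y), mulgV, mul1g, mulgV. reflexivity. Qed.
Lemma inv_one {G : MLA} : inv (@one G) = one.
Proof. symmetry. apply inv_unique. apply mul1g. Qed.

Lemma star_anti {G : MLA} (x y : G) : mul (star y x) (star x y) = one.
Proof.
  pose proof (star_xx (mul x y)) as E.
  rewrite star_mull, !star_mulr, !star_xx, mul1g, mul1g, mulgV, mulg1 in E.
  rewrite <- !mulA, mulVKg in E.
  apply inv_unique in E.
  apply (rcancel (inv x)). rewrite mul1g, <- mulA. exact E.
Qed.
Lemma star_inv {G : MLA} (x y : G) : star x y = inv (star y x).
Proof. apply inv_unique. apply star_anti. Qed.
Lemma star_Lc_r {G : MLA} (c w : G) : LcenterG c -> star w c = one.
Proof. intro Hc. rewrite star_inv, Hc, inv_one. reflexivity. Qed.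
Lemma star_MZ_l {G : MLA} (u c w : G) : MZ c -> star (mul u c) w = star u w.
Proof. intros [Hl _]. rewrite star_mull, Hl, mul1g, mulgV, mul1g. reflexivity. Qed.
Lemma star_MZ_r {G : MLA} (u c w : G) : MZ c -> star w (mul u c) = star w u.
Proof. intros [Hl _]. rewrite star_mulr, (star_Lc_r w Hl), mul1g, mulgV, mulg1. reflexivity. Qed.

Lemma center_inv {G : MLA} (c y : G) : centerG c -> mul (inv c) y = mul y (inv c).
Proof.
  intro Hc. apply (lcancel c). rewrite mulKg, mulA, Hc, mulgK. reflexivity.
Qed.
Lemma comm_c_l {G : MLA} (u c w : G) : centerG c -> comm (mul u c) w = comm u w.
Proof.
  intro Hc. unfold comm. rewrite inv_mul, <- !mulA. f_equal.
  rewrite (mulA c w), Hc, <- mulA. f_equal. rewrite mulKg. reflexivity.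
Qed.
Lemma comm_c_r {G : MLA} (u c w : G) : centerG c -> comm w (mul u c) = comm w u.
Proof.
  intro Hc. unfold comm. rewrite inv_mul, <- !mulA. f_equal. f_equal.
  rewrite mulA, Hc, <- mulA, mulKg. reflexivity.
Qed.

Lemma hom_one {G1 G2 : MLA} (f : G1 -> G2) : is_hom f -> f one = one.
Proof.
  intros [Hm _]. apply (lcancel (f one)). rewrite <- Hm, !mulg1. reflexivity.
Qed.
Lemma hom_inv {G1 G2 : MLA} (f : G1 -> G2) x : is_hom f -> f (inv x) = inv (f x).
Proof.
  intros Hf. apply inv_unique. destruct Hf as [Hm Hs] eqn:E.
  rewrite <- Hm, mulgV. apply hom_one; assumption.
Qed.
Lemma hom_conj {G1 G2 : MLA} (f : G1 -> G2) x y : is_hom f -> f (conj x y) = conj (f x) (f y).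
Proof. intros Hf. unfold conj. rewrite (proj1 Hf), (proj1 Hf), hom_inv by assumption. reflexivity. Qed.
Lemma hom_comm {G1 G2 : MLA} (f : G1 -> G2) x y : is_hom f -> f (comm x y) = comm (f x) (f y).
Proof. intros Hf. unfold comm. rewrite !(proj1 Hf), !hom_inv by assumption. reflexivity. Qed.

Arguments hom_one {G1 G2} f _.
Arguments hom_inv {G1 G2} f x _.
Arguments hom_conj {G1 G2} f x y _.
Arguments hom_comm {G1 G2} f x y _.

Lemma starG_ideal (G : MLA) : is_ideal (@starG G).
Proof.
  repeat split.
  - intros I HI _. destruct (id HI) as [[H1 _] _]. exact H1.
  - intros x y Hx Hy I HI Hst. destruct (id HI) as [[_ [H2 _]] _]. apply H2; [apply Hx|apply Hy]; assumption.
  - intros x Hx I HI Hst. destruct (id HI) as [[_ [_ H3]] _]. apply H3; apply Hx; assumption.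
  - intros g x Hx I HI Hst. destruct (id HI) as [_ [H4 _]]. apply H4; apply Hx; assumption.
  - intros g x Hx I HI Hst. destruct (id HI) as [_ [_ H5]]. apply H5; apply Hx; assumption.
Qed.
Lemma starG_star {G : MLA} (a b : G) : starG (star a b).
Proof. intros I _ H. apply H. Qed.
Lemma commG_sub (G : MLA) : is_subgroup (@commG G).
Proof.
  repeat split.
  - intros S [H1 _] _. exact H1.
  - intros x y Hx Hy S HS Hc. destruct (id HS) as [_ [H2 _]]. apply H2; [apply Hx|apply Hy]; assumption.
  - intros x Hx S HS Hc. destruct (id HS) as [_ [_ H3]]. apply H3; apply Hx; assumption.
Qed.
Lemma commG_comm {G : MLA} (a b : G) : commG (comm a b).
Proof. intros S _ H. apply H. Qed.

Lemma McommG_star {G : MLA} (x : G) : starG x -> McommG x.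
Proof. intro H. exists x, one. split; [exact H|split]. apply commG_sub. rewrite mulg1; reflexivity. Qed.
Lemma McommG_comm {G : MLA} (x : G) : commG x -> McommG x.
Proof. intro H. exists one, x. split; [apply starG_ideal|split]. exact H. rewrite mul1g; reflexivity. Qed.
Lemma McommG_mul {G : MLA} (x y : G) : McommG x -> McommG y -> McommG (mul x y).
Proof.
  intros [a [b [Ha [Hb ->]]]] [a' [b' [Ha' [Hb' ->]]]].
  exists (mul a (conj b a')), (mul b b'). split; [|split].
  - destruct (starG_ideal G) as [[_ [Hm _]] [Hc _]]. apply Hm; auto.
  - destruct (commG_sub G) as [_ [Hm _]]. apply Hm; auto.
  - unfold conj. rewrite <- !mulA. f_equal. f_equal. f_equal. rewrite mulVKg. reflexivity.
Qed.
Lemma McommG_inv {G : MLA} (x : G) : McommG x -> McommG (inv x).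
Proof.
  intros [a [b [Ha [Hb ->]]]].
  exists (conj (inv b) (inv a)), (inv b). split; [|split].
  - destruct (starG_ideal G) as [[_ [_ Hi]] [Hc _]]. apply Hc, Hi; auto.
  - destruct (commG_sub G) as [_ [_ Hi]]. apply Hi; auto.
  - unfold conj. rewrite inv_mul, invK, <- !mulA, mulgV, mulg1. reflexivity.
Qed.

Lemma starG_map {G1 G2 : MLA} (f : G1 -> G2) x : is_hom f -> starG x -> starG (f x).
Proof.
  intros Hf Hx. apply (Hx (fun y => starG (f y))).
  - destruct (starG_ideal G2) as [[H1 [H2 H3]] [H4 H5]].
    repeat split.
    + rewrite hom_one by assumption. exact H1.
    + intros a b Ha Hb. rewrite (proj1 Hf). auto.
    + intros a Ha. rewrite hom_inv by assumption. auto.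
    + intros g a Ha. rewrite hom_conj by assumption. auto.
    + intros g a Ha. rewrite (proj2 Hf). auto.
  - intros a b. rewrite (proj2 Hf). apply starG_star.
Qed.
Lemma commG_map {G1 G2 : MLA} (f : G1 -> G2) x : is_hom f -> commG x -> commG (f x).
Proof.
  intros Hf Hx. apply (Hx (fun y => commG (f y))).
  - destruct (commG_sub G2) as [H1 [H2 H3]].
    repeat split.
    + rewrite hom_one by assumption. exact H1.
    + intros a b Ha Hb. rewrite (proj1 Hf). auto.
    + intros a Ha. rewrite hom_inv by assumption. auto.
  - intros a b. rewrite hom_comm by assumption. apply commG_comm.
Qed.
Lemma McommG_map {G1 G2 : MLA} (f : G1 -> G2) x : is_hom f -> McommG x -> McommG (f x).
Proof.
  intros Hf [a [b [Ha [Hb ->]]]]. exists (f a), (f b). split; [|split].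
  - apply starG_map; auto.
  - apply commG_map; auto.
  - apply (proj1 Hf).
Qed.

Theorem proposition4p8 (H1 G1 K1 H2 G2 K2 : MLA)
  (alpha1 : H1 -> G1) (beta1 : G1 -> K1) (alpha2 : H2 -> G2) (beta2 : G2 -> K2)
  (lam : H1 -> H2) (mu : G1 -> G2) (nu : K1 -> K2) :
  central_extension alpha1 beta1 ->
  central_extension alpha2 beta2 ->
  (forall g : G1, (exists h, alpha1 h = g) <-> MZ g) ->
  (forall g : G2, (exists h, alpha2 h = g) <-> MZ g) ->
  ext_morphism alpha1 beta1 alpha2 beta2 lam mu nu ->
  (forall g : G1, mu g = one -> McommG g -> g = one) ->
  (forall g2 : G2, exists (g1 : G1) (h2 : H2), g2 = mul (mu g1) (alpha2 h2)) ->
  isoclinic_morphism alpha1 beta1 alpha2 beta2 lam mu nu.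
Proof.
  intros CE1 CE2 Z1 Z2 EM Hker Hsurj.
  destruct CE1 as [Ha1 [Hb1 [Hai1 [Hbs1 [Hk1 Hc1]]]]].
  destruct CE2 as [Ha2 [Hb2 [Hai2 [Hbs2 [Hk2 Hc2]]]]].
  pose proof EM as EM'.
  destruct EM' as [Hl [Hmu [Hnu [Hcomm1 Hcomm2]]]].
  assert (Hfib : forall g h, beta2 h = beta2 (mu g) -> exists k, h = mul (mu g) (alpha2 k)).
  { intros g h E. destruct (proj1 (Hk2 (mul (inv (mu g)) h))) as [k Hk].
    - rewrite (proj1 Hb2), hom_inv, E, mulVg by assumption. reflexivity.
    - exists k. rewrite Hk, mulKg. reflexivity. }
  split; [exact EM|]. split; [|split; [|split; [|split; [|split]]]].
  -
    intros k k' E.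
    destruct (Hbs1 k) as [g <-]. destruct (Hbs1 k') as [g' <-].
    set (x := mul g (inv g')).
    assert (Hmx : beta2 (mu x) = one).
    { unfold x. rewrite (proj1 Hmu), hom_inv, (proj1 Hb2), hom_inv, !Hcomm2, E, mulgV
        by assumption. reflexivity. }
    destruct (proj1 (Hk2 _) Hmx) as [hh Hhh].
    destruct (Hc2 hh) as [HL HC]. rewrite Hhh in HL, HC.
    assert (HMZ : MZ x).
    { split.
      - intro y. apply Hker.
        + rewrite (proj2 Hmu). apply HL.
        + apply McommG_star, starG_star.
      - intro y. assert (comm x y = one).
        { apply Hker.
          + rewrite (hom_comm mu) by assumption. unfold comm.
            rewrite mulA, HC, <- mulA, mulKg, mulgV. reflexivity.
          + apply McommG_comm, commG_comm. }
        unfold comm in H. rewrite !mulA in H. apply (rcancel (inv x)), (rcancel (inv y)).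
        rewrite H, mulgK, mulgV. reflexivity. }
    destruct (proj2 (Z1 x) HMZ) as [h1 Hh1].
    assert (beta1 x = one) by (apply Hk1; eauto).
    unfold x in H. rewrite (proj1 Hb1), hom_inv in H by assumption.
    apply (rcancel (inv (beta1 g'))). rewrite H, mulgV. reflexivity.
  -
    intro k2. destruct (Hbs2 k2) as [g2 <-]. destruct (Hsurj g2) as [g1 [h2 ->]].
    exists (beta1 g1). rewrite (proj1 Hb2), <- Hcomm2.
    assert (beta2 (alpha2 h2) = one) by (apply Hk2; eauto). rewrite H, mulg1. reflexivity.
  - intros g Hg. apply McommG_map; auto.
  - intros g g' Hg Hg' E.
    assert (mul g (inv g') = one).
    { apply Hker.
      - rewrite (proj1 Hmu), hom_inv, E, mulgV by assumption. reflexivity.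
      - apply McommG_mul; auto. apply McommG_inv; auto. }
    apply (rcancel (inv g')). rewrite H, mulgV. reflexivity.
  - intros x [a [b [Ha [Hb ->]]]].
    assert (HA : exists a1, starG a1 /\ mu a1 = a).
    { apply (Ha (fun y => exists a1, starG a1 /\ mu a1 = y)).
      + destruct (starG_ideal G1) as [[S1 [S2 S3]] [S4 S5]].
        repeat split.
        * exists one. split; auto. apply hom_one; auto.
        * intros p q [p1 [Hp1 <-]] [q1 [Hq1 <-]]. exists (mul p1 q1). split; auto.
          apply (proj1 Hmu).
        * intros p [p1 [Hp1 <-]]. exists (inv p1). split; auto. apply hom_inv; auto.
        * intros g p [p1 [Hp1 <-]]. destruct (Hsurj g) as [g1 [h2 ->]].
          exists (conj g1 p1). split; auto. rewrite hom_conj by assumption.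
          unfold conj. rewrite inv_mul, <- !mulA. f_equal.
          destruct (Hc2 h2) as [_ HC]. rewrite (mulA (alpha2 h2)), HC, <- mulA, mulKg.
          reflexivity.
        * intros g p [p1 [Hp1 <-]]. destruct (Hsurj g) as [g1 [h2 ->]].
          exists (star g1 p1). split; auto. rewrite star_MZ_l by auto. apply (proj2 Hmu).
      + intros p q. destruct (Hsurj p) as [p1 [hp ->]]. destruct (Hsurj q) as [q1 [hq ->]].
        exists (star p1 q1). split; [apply starG_star|].
        rewrite star_MZ_l, star_MZ_r by auto. apply (proj2 Hmu). }
    assert (HB : exists b1, commG b1 /\ mu b1 = b).
    { apply (Hb (fun y => exists b1, commG b1 /\ mu b1 = y)).
      + destruct (commG_sub G1) as [S1 [S2 S3]].
        repeat split.
        * exists one. split; auto. apply hom_one; auto.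
        * intros p q [p1 [Hp1 <-]] [q1 [Hq1 <-]]. exists (mul p1 q1). split; auto.
          apply (proj1 Hmu).
        * intros p [p1 [Hp1 <-]]. exists (inv p1). split; auto. apply hom_inv; auto.
      + intros p q. destruct (Hsurj p) as [p1 [hp ->]]. destruct (Hsurj q) as [q1 [hq ->]].
        exists (comm p1 q1). split; [apply commG_comm|].
        rewrite comm_c_l, comm_c_r by apply Hc2. apply hom_comm; auto. }
    destruct HA as [a1 [Ha1' <-]]. destruct HB as [b1 [Hb1' <-]].
    exists (mul a1 b1). split.
    + exists a1, b1. auto.
    + apply (proj1 Hmu).
  - intros g g' h h' E E'. rewrite <- Hcomm2 in E, E'.
    destruct (Hfib _ _ E) as [k ->]. destruct (Hfib _ _ E') as [k' ->].
    split.
    + rewrite comm_c_l, comm_c_r by apply Hc2. apply hom_comm; auto.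
    + rewrite star_MZ_l, star_MZ_r by auto. apply (proj2 Hmu).
Qed.
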